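(* Let $\mathbb{C}$ be a regular Gumm category. Suppose given objects and morphisms $\varphi\colon P\to Z$, $\sigma\colon Z\to P$, $x\colon P\to X$, $f\colon X\to Y$, $s\colon Y\to X$, $y\colon Z\to Y$, $u\colon X\to U$, $v\colon Y\to V$, $w\colon U\to V$ in $\mathbb{C}$ such that: (i) $\varphi\sigma=1_Z$ and $fs=1_Y$ (so $\varphi$ and $f$ are split epimorphisms), $x\sigma=sy$, and $fx=y\varphi$; (ii) $x$ and $y$ are regular epimorphisms; (iii) $wu=vf$; (iv) the outer rectangle is a pullback, i.e. the square with sides $\varphi\colon P\to Z$, $ux\colon P\to U$, $vy\colon Z\to V$, $w\colon U\to V$ is a pullback (so $P\cong Z\times_V U$). Then both the left square ($fx=y\varphi$) and the right square ($wu=vf$) are pullbacks.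
   Context: A regular category is a finitely complete category in which every kernel pair has a coequaliser and regular epimorphisms are stable under pullback. For equivalence relations $R,S$ on an object $X$ of a finitely complete category, $R\,\square\, S$ denotes the largest double equivalence relation on $R$ and $S$: in terms of generalized elements, it is the relation on $R$ consisting of pairs $((a,b),(c,d))$ with $(a,b),(c,d)\in R$, $(a,c)\in S$ and $(b,d)\in S$; its two projections $\pi_1,\pi_2\colon R\square S\to R$ send such a pair to $(a,b)$ and $(c,d)$ respectively. If $T$ is another equivalence relation on $X$ with $R\wedge S\le T\le R$, there is a canonical inclusion $(i,j)$ of $T\square S$ into $R\square S$ over the inclusion $i\colon T\to R$. A finitely complete category is a Gumm category if for all equivalence relations $R,S,T$ on a same object with $R\wedge S\le T\le R$, this inclusion is a discrete fibration, i.e. the commutative squares $i\pi_k=\pi_k j$ ($k=1,2$) are pullbacks. *)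

(* Defs.v *)
Record Category := {
  Ob :> Type;
  Hom : Ob -> Ob -> Type;
  idm : forall A, Hom A A;
  comp : forall A B C, Hom B C -> Hom A B -> Hom A C;
  comp_assoc : forall A B C D (h : Hom C D) (g : Hom B C) (f : Hom A B),
      comp A C D h (comp A B C g f) = comp A B D (comp B C D h g) f;
  comp_id_l : forall A B (f : Hom A B), comp A B B (idm B) f = f;
  comp_id_r : forall A B (f : Hom A B), comp A A B f (idm A) = f
}.

Arguments Hom {c} _ _.
Arguments idm {c} _.
Arguments comp {c A B C} _ _.

Declare Scope cat_scope.
Notation "A ~> B" := (Hom A B) (at level 90, right associativity) : cat_scope.
(* g ∘ f = "first f, then g" *)
Notation "g ∘ f" := (comp g f) (at level 40, left associativity) : cat_scope.
Open Scope cat_scope.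

Section Defs.
Context {C : Category}.

Definition is_pullback {A B C0 P : C} (f : A ~> C0) (g : B ~> C0)
    (p1 : P ~> A) (p2 : P ~> B) : Prop :=
  f ∘ p1 = g ∘ p2 /\
  forall (Q : C) (q1 : Q ~> A) (q2 : Q ~> B), f ∘ q1 = g ∘ q2 ->
    exists! h : Q ~> P, p1 ∘ h = q1 /\ p2 ∘ h = q2.

Definition is_terminal (T : C) : Prop :=
  forall A : C, exists! t : A ~> T, True.

Definition finitely_complete : Prop :=
  (exists T : C, is_terminal T) /\
  forall (A B C0 : C) (f : A ~> C0) (g : B ~> C0),
    exists (P : C) (p1 : P ~> A) (p2 : P ~> B), is_pullback f g p1 p2.

Definition is_coequalizer {A B Q : C} (a b : A ~> B) (e : B ~> Q) : Prop :=
  e ∘ a = e ∘ b /\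
  forall (W : C) (h : B ~> W), h ∘ a = h ∘ b ->
    exists! k : Q ~> W, k ∘ e = h.

Definition regular_epi {B Q : C} (e : B ~> Q) : Prop :=
  exists (K : C) (a b : K ~> B), is_coequalizer a b e.

Definition regular_category : Prop :=
  finitely_complete /\
  (forall (A B K : C) (f : A ~> B) (k1 k2 : K ~> A),
      is_pullback f f k1 k2 -> exists (Q : C) (e : A ~> Q), is_coequalizer k1 k2 e) /\
  (forall (A B C0 P : C) (f : A ~> C0) (g : B ~> C0) (p1 : P ~> A) (p2 : P ~> B),
      is_pullback f g p1 p2 -> regular_epi f -> regular_epi p2).

Definition jointly_monic {D X Y : C} (p1 : D ~> X) (p2 : D ~> Y) : Prop :=
  forall (T : C) (h k : T ~> D), p1 ∘ h = p1 ∘ k -> p2 ∘ h = p2 ∘ k -> h = k.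

(* Equivalence relations on X, as jointly monic spans, with reflexivity,
   symmetry and transitivity expressed on generalized elements. *)
Definition rel_mem {X R : C} (r1 r2 : R ~> X) {T : C} (a b : T ~> X) : Prop :=
  exists h : T ~> R, r1 ∘ h = a /\ r2 ∘ h = b.

Record EqRel (X : C) := {
  er_ob : C;
  er1 : er_ob ~> X;
  er2 : er_ob ~> X;
  er_monic : jointly_monic er1 er2;
  er_refl : forall (T : C) (a : T ~> X), rel_mem er1 er2 a a;
  er_sym : forall (T : C) (a b : T ~> X), rel_mem er1 er2 a b -> rel_mem er1 er2 b a;
  er_trans : forall (T : C) (a b c : T ~> X),
      rel_mem er1 er2 a b -> rel_mem er1 er2 b c -> rel_mem er1 er2 a c
}.

Arguments er_ob {X} _.
Arguments er1 {X} _.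
Arguments er2 {X} _.

Definition inrel {X : C} (R : EqRel X) {T : C} (a b : T ~> X) : Prop :=
  rel_mem (er1 R) (er2 R) a b.

(* (D, p1, p2) represents R □ S: the relation on R of pairs ((a,b),(c,d))
   with (a,c) ∈ S and (b,d) ∈ S; p1, p2 its two projections to R. *)
Definition is_box {X : C} (R S : EqRel X) (D : C) (p1 p2 : D ~> er_ob R) : Prop :=
  jointly_monic p1 p2 /\
  forall (T : C) (p q : T ~> er_ob R),
    rel_mem p1 p2 p q <->
    (inrel S (er1 R ∘ p) (er1 R ∘ q) /\ inrel S (er2 R ∘ p) (er2 R ∘ q)).

(* Gumm category: for R ∧ S ≤ T ≤ R, the canonical inclusion (i, j) of T □ S
   into R □ S is a discrete fibration: the squares i π_k = π_k j are pullbacks. *)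
Definition gumm_category : Prop :=
  forall (X : C) (R S T : EqRel X),
    (forall (Q : C) (a b : Q ~> X), inrel R a b -> inrel S a b -> inrel T a b) ->
    (forall (Q : C) (a b : Q ~> X), inrel T a b -> inrel R a b) ->
    forall (i : er_ob T ~> er_ob R), er1 R ∘ i = er1 T -> er2 R ∘ i = er2 T ->
    forall (D1 : C) (p1 p2 : D1 ~> er_ob R) (D2 : C) (q1 q2 : D2 ~> er_ob T),
      is_box R S D1 p1 p2 -> is_box T S D2 q1 q2 ->
      forall j : D2 ~> D1, p1 ∘ j = i ∘ q1 -> p2 ∘ j = i ∘ q2 ->
        is_pullback i p1 q1 j /\ is_pullback i p2 q2 j.

End Defs.

Arguments finitely_complete C : clear implicits.
Arguments regular_category C : clear implicits.
Arguments gumm_category C : clear implicits.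

(* Main.v *)
Require Import Defs.
From Stdlib Require Import Setoid.

Ltac N := repeat match goal with
  | H : context [comp (comp _ _) _] |- _ => rewrite <- !comp_assoc in H
  end; try rewrite <- !comp_assoc.

Section H.
Context {C : Category}.

Lemma rw2 {A B D E : C} {g : B ~> D} {f : A ~> B} {g' : E ~> D} {f' : A ~> E}
  (H : g ∘ f = g' ∘ f') {Z : C} (h : Z ~> A) : g ∘ (f ∘ h) = g' ∘ (f' ∘ h).
Proof. rewrite !comp_assoc, H. reflexivity. Qed.

Lemma pb_comm {A B C0 P : C} {f : A ~> C0} {g : B ~> C0} {p1 : P ~> A} {p2 : P ~> B}
  (H : is_pullback f g p1 p2) : f ∘ p1 = g ∘ p2.
Proof. apply H. Qed.

Lemma pb_unique {A B C0 P : C} {f : A ~> C0} {g : B ~> C0} {p1 : P ~> A} {p2 : P ~> B}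
  (H : is_pullback f g p1 p2) {Q : C} (h k : Q ~> P) :
  p1 ∘ h = p1 ∘ k -> p2 ∘ h = p2 ∘ k -> h = k.
Proof.
  intros E1 E2. destruct H as [Hc Hu].
  destruct (Hu Q (p1 ∘ h) (p2 ∘ h)) as [m [_ Hm]].
  { rewrite !comp_assoc, Hc; reflexivity. }
  rewrite <- (Hm h (conj eq_refl eq_refl)). apply Hm. split; symmetry; assumption.
Qed.

Lemma pb_ex {A B C0 P : C} {f : A ~> C0} {g : B ~> C0} {p1 : P ~> A} {p2 : P ~> B}
  (H : is_pullback f g p1 p2) {Q : C} (q1 : Q ~> A) (q2 : Q ~> B) :
  f ∘ q1 = g ∘ q2 -> exists h, p1 ∘ h = q1 /\ p2 ∘ h = q2.
Proof.
  intro E. destruct H as [_ Hu]. destruct (Hu Q q1 q2 E) as [m [Hm _]]. exists m; exact Hm.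
Qed.

Lemma regepi_epi {B Q : C} (e : B ~> Q) : regular_epi e ->
  forall W (h k : Q ~> W), h ∘ e = k ∘ e -> h = k.
Proof.
  intros [K [a [b [Hc Hu]]]] W h k E.
  destruct (Hu W (h ∘ e)) as [m [_ Hm]].
  { rewrite <- !comp_assoc, Hc. reflexivity. }
  rewrite <- (Hm h eq_refl), <- (Hm k (eq_sym E)). reflexivity.
Qed.

Lemma prod_ex (HF : finitely_complete C) (A B : C) :
  exists (Pr : C) (p1 : Pr ~> A) (p2 : Pr ~> B),
   (forall Q (q1 : Q ~> A) (q2 : Q ~> B), exists h, p1 ∘ h = q1 /\ p2 ∘ h = q2)
   /\ jointly_monic p1 p2.
Proof.
  destruct HF as [[T HT] Hpb].
  destruct (HT A) as [tA [_ HtA]]. destruct (HT B) as [tB [_ HtB]].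
  destruct (Hpb A B T tA tB) as [Pr [p1 [p2 Hp]]].
  exists Pr, p1, p2. split.
  - intros Q q1 q2. apply (pb_ex Hp).
    destruct (HT Q) as [tQ [_ HtQ]].
    rewrite <- (HtQ (tA ∘ q1) I), <- (HtQ (tB ∘ q2) I). reflexivity.
  - intros Z h k E1 E2. exact (pb_unique Hp h k E1 E2).
Qed.

Lemma box_ex (HF : finitely_complete C) {X : C} (R S : EqRel X) :
  exists D p1 p2, is_box R S D p1 p2.
Proof.
  destruct (prod_ex HF X X) as [XX [x1 [x2 [Hxp Hxm]]]].
  destruct (prod_ex HF (er_ob _ R) (er_ob _ R)) as [RR [r1 [r2 [Hrp Hrm]]]].
  destruct (Hxp _ (er1 _ S) (er2 _ S)) as [mS [HmS1 HmS2]].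
  destruct (Hxp _ (er1 _ R ∘ r1) (er1 _ R ∘ r2)) as [g1 [Hg11 Hg12]].
  destruct (Hxp _ (er2 _ R ∘ r1) (er2 _ R ∘ r2)) as [g2 [Hg21 Hg22]].
  destruct HF as [_ Hpb].
  destruct (Hpb _ _ _ mS g1) as [D1 [a1 [b1 HD1]]].
  destruct (Hpb _ _ _ mS g2) as [D2 [a2 [b2 HD2]]].
  destruct (Hpb _ _ _ b1 b2) as [D [c1 [c2 HD]]].
  pose proof (pb_comm HD1) as K1. pose proof (pb_comm HD2) as K2.
  pose proof (pb_comm HD) as K.
  assert (mSmono : forall Z (h k : Z ~> er_ob _ S), mS ∘ h = mS ∘ k -> h = k).
  { intros Z h k E. apply (er_monic _ S).
    - rewrite <- HmS1, <- !comp_assoc, E. reflexivity.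
    - rewrite <- HmS2, <- !comp_assoc, E. reflexivity. }
  exists D, (r1 ∘ (b1 ∘ c1)), (r2 ∘ (b1 ∘ c1)). split.
  - intros Z h k E1 E2. N.
    assert (Eb : b1 ∘ (c1 ∘ h) = b1 ∘ (c1 ∘ k)) by (apply Hrm; assumption).
    assert (Ea : a1 ∘ (c1 ∘ h) = a1 ∘ (c1 ∘ k)).
    { apply mSmono. rewrite !(rw2 K1), Eb. reflexivity. }
    assert (Ec1 : c1 ∘ h = c1 ∘ k) by exact (pb_unique HD1 _ _ Ea Eb).
    assert (Eb2 : b2 ∘ (c2 ∘ h) = b2 ∘ (c2 ∘ k)).
    { rewrite <- !(rw2 K), Ec1. reflexivity. }
    assert (Ea2 : a2 ∘ (c2 ∘ h) = a2 ∘ (c2 ∘ k)).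
    { apply mSmono. rewrite !(rw2 K2), Eb2. reflexivity. }
    assert (Ec2 : c2 ∘ h = c2 ∘ k) by exact (pb_unique HD2 _ _ Ea2 Eb2).
    exact (pb_unique HD _ _ Ec1 Ec2).
  - intros T p q. split.
    + intros [h [Hp Hq]]. N. split.
      * exists (a1 ∘ (c1 ∘ h)). rewrite <- HmS1, <- HmS2. N.
        rewrite !(rw2 K1), (rw2 Hg11), (rw2 Hg12). N. rewrite Hp, Hq. split; reflexivity.
      * exists (a2 ∘ (c2 ∘ h)). rewrite <- HmS1, <- HmS2. N.
        rewrite !(rw2 K2), (rw2 Hg21), (rw2 Hg22). N. rewrite <- !(rw2 K). rewrite Hp, Hq. split; reflexivity.
    + intros [[sA [HA1 HA2]] [sB [HB1 HB2]]].
      destruct (Hrp _ p q) as [t [Ht1 Ht2]].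
      destruct (pb_ex HD1 sA t) as [d1 [Hd11 Hd12]].
      { apply Hxm; N. rewrite !comp_assoc, HmS1, Hg11, <- comp_assoc, Ht1. exact HA1.
        rewrite !comp_assoc, HmS2, Hg12, <- comp_assoc, Ht2. exact HA2. }
      destruct (pb_ex HD2 sB t) as [d2 [Hd21 Hd22]].
      { apply Hxm; N. rewrite !comp_assoc, HmS1, Hg21, <- comp_assoc, Ht1. exact HB1.
        rewrite !comp_assoc, HmS2, Hg22, <- comp_assoc, Ht2. exact HB2. }
      destruct (pb_ex HD d1 d2) as [h [Hh1 Hh2]].
      { rewrite Hd12, Hd22. reflexivity. }
      exists h. N. rewrite Hh1, Hd12. split; assumption.
Qed.
End H.
Section K.
Context {C : Category}.

Lemma kp_mem {A B K : C} {g : A ~> B} {k1 k2 : K ~> A} (H : is_pullback g g k1 k2)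
  {T : C} (a b : T ~> A) : rel_mem k1 k2 a b <-> g ∘ a = g ∘ b.
Proof.
  split.
  - intros [h [<- <-]]. N. rewrite (rw2 (pb_comm H)). reflexivity.
  - intro E. exact (pb_ex H a b E).
Qed.

Definition kpR {A B K : C} {g : A ~> B} {k1 k2 : K ~> A} (H : is_pullback g g k1 k2) : EqRel A.
Proof.
  refine (Build_EqRel A K k1 k2 _ _ _ _).
  - intros T h k E1 E2. exact (pb_unique H h k E1 E2).
  - intros T a. apply (kp_mem H). reflexivity.
  - intros T a b. rewrite !(kp_mem H). intro E; symmetry; exact E.
  - intros T a b c. rewrite !(kp_mem H). intros E1 E2; rewrite E1; exact E2.
Defined.

Lemma kpR_inrel {A B K : C} {g : A ~> B} {k1 k2 : K ~> A} (H : is_pullback g g k1 k2)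
  {T : C} (a b : T ~> A) : inrel (kpR H) a b <-> g ∘ a = g ∘ b.
Proof. exact (kp_mem H a b). Qed.

End K.
Lemma rw1 {C : Category} {A B D : C} {g : B ~> D} {f : A ~> B} {e : A ~> D}
  (H : g ∘ f = e) {Z : C} (h : Z ~> A) : g ∘ (f ∘ h) = e ∘ h.
Proof. rewrite comp_assoc, H. reflexivity. Qed.

Lemma rw3 {C : Category} {A B D E : C} {g : B ~> D} {f : E ~> B} {k : A ~> E} {e : A ~> D}
  (H : g ∘ (f ∘ k) = e) {Z : C} (h : Z ~> A) : g ∘ (f ∘ (k ∘ h)) = e ∘ h.
Proof. rewrite <- H, !comp_assoc. reflexivity. Qed.

Theorem proposition4p1 (C : Category)
    (HC_reg : regular_category C) (HC_gumm : gumm_category C)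
    (P Z X Y U V : C)
    (phi : P ~> Z) (sigma : Z ~> P) (x : P ~> X) (f : X ~> Y) (s : Y ~> X)
    (y : Z ~> Y) (u : X ~> U) (v : Y ~> V) (w : U ~> V)
    (H_phisigma : phi ∘ sigma = idm Z) (H_fs : f ∘ s = idm Y)
    (H_xsigma : x ∘ sigma = s ∘ y) (H_fx : f ∘ x = y ∘ phi)
    (H_x : regular_epi x) (H_y : regular_epi y)
    (H_wu : w ∘ u = v ∘ f)
    (H_outer : is_pullback w (v ∘ y) (u ∘ x) phi) :
  is_pullback f y x phi /\ is_pullback w v u f.
Proof.
  destruct HC_reg as [HF [_ Hstab]].
  pose proof HF as HF'. destruct HF' as [_ Hpb].
  assert (key : forall T (a b : T ~> P), f ∘ (x ∘ a) = f ∘ (x ∘ b) ->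
            u ∘ (x ∘ a) = u ∘ (x ∘ b) -> x ∘ a = x ∘ b).
  { intros T a b Ef Eu.
    destruct (Hpb _ _ _ (u ∘ x) (u ∘ x)) as [KR [r1 [r2 HR]]].
    destruct (Hpb _ _ _ phi phi) as [KS [s1 [s2 HS]]].
    destruct (Hpb _ _ _ x x) as [KT [t1 [t2 HT]]].
    destruct (pb_ex HR t1 t2) as [i [Hi1 Hi2]].
    { N. rewrite (pb_comm HT). reflexivity. }
    destruct (box_ex HF (kpR HR) (kpR HS)) as [D1 [p1 [p2 HB1]]].
    destruct (box_ex HF (kpR HT) (kpR HS)) as [D2 [q1 [q2 HB2]]].
    assert (Hq : phi ∘ (t1 ∘ q1) = phi ∘ (t1 ∘ q2) /\ phi ∘ (t2 ∘ q1) = phi ∘ (t2 ∘ q2)).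
    { destruct (proj1 (proj2 HB2 _ q1 q2) (ex_intro _ (idm _) (conj (comp_id_r _ _ _ _) (comp_id_r _ _ _ _))))
        as [E1 E2].
      apply (kpR_inrel HS) in E1. apply (kpR_inrel HS) in E2. split; assumption. }
    destruct (proj2 (proj2 HB1 _ (i ∘ q1) (i ∘ q2))) as [j [Hj1 Hj2]].
    { split; apply (kpR_inrel HS); simpl; rewrite ?(rw1 Hi1), ?(rw1 Hi2); apply Hq. }
    destruct (HC_gumm P (kpR HR) (kpR HS) (kpR HT)) with (i := i) (j := j)
       (D1 := D1) (p1 := p1) (p2 := p2) (D2 := D2) (q1 := q1) (q2 := q2) as [PB1 _];
      try assumption.
    { intros Q c d E1 E2. apply (kpR_inrel HR) in E1. apply (kpR_inrel HS) in E2.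
      apply (kpR_inrel HT). f_equal. exact (pb_unique H_outer c d E1 E2). }
    { intros Q c d E. apply (kpR_inrel HT) in E. apply (kpR_inrel HR). N. rewrite E. reflexivity. }
    destruct (pb_ex HT (sigma ∘ (phi ∘ a)) (sigma ∘ (phi ∘ b))) as [m1 [Hm11 Hm12]].
    { rewrite !(rw2 H_xsigma), <- !(rw2 H_fx), Ef. reflexivity. }
    destruct (pb_ex HR a b) as [rR [Hr1 Hr2]].
    { N. exact Eu. }
    destruct (proj2 (proj2 HB1 _ (i ∘ m1) rR)) as [m2 [Hm21 Hm22]].
    { split; apply (kpR_inrel HS); simpl.
      - rewrite (rw1 Hi1), Hm11, Hr1, (rw1 H_phisigma), comp_id_l. reflexivity.
      - rewrite (rw1 Hi2), Hm12, Hr2, (rw1 H_phisigma), comp_id_l. reflexivity. }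
    destruct (pb_ex PB1 m1 m2) as [h [Hh1 Hh2]].
    { symmetry; exact Hm21. }
    rewrite <- Hr1, <- Hr2, <- Hm22, <- Hh2, (rw2 Hj2), (rw1 Hi1), (rw1 Hi2).
    N. rewrite (rw2 (pb_comm HT)). reflexivity. }
  assert (mono : forall T (h k : T ~> X), f ∘ h = f ∘ k -> u ∘ h = u ∘ k -> h = k).
  { intros T h k Ef Eu.
    destruct (Hpb _ _ _ x h) as [E1 [ea [e1 HE1]]].
    pose proof (Hstab _ _ _ _ _ _ _ _ HE1 H_x) as Re1.
    destruct (Hpb _ _ _ x (k ∘ e1)) as [E2 [eb [e2 HE2]]].
    pose proof (Hstab _ _ _ _ _ _ _ _ HE2 H_x) as Re2.
    pose proof (pb_comm HE1) as K1. pose proof (pb_comm HE2) as K2.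
    assert (Hab : x ∘ (ea ∘ e2) = x ∘ eb).
    { apply key.
      - rewrite (rw2 K1), K2. N. rewrite !comp_assoc, Ef. reflexivity.
      - rewrite (rw2 K1), K2. N. rewrite !comp_assoc, Eu. reflexivity. }
    apply (regepi_epi _ Re1). apply (regepi_epi _ Re2).
    rewrite (rw2 K1), K2 in Hab. N. exact Hab. }
  assert (PBr : is_pullback w v u f).
  { split; [exact H_wu|].
    intros Q q1 q2 E.
    destruct (Hpb _ _ _ y q2) as [E0 [ez [e HE]]].
    pose proof (Hstab _ _ _ _ _ _ _ _ HE H_y) as Re.
    pose proof (pb_comm HE) as K.
    destruct (pb_ex H_outer (q1 ∘ e) ez) as [p [Hp1 Hp2]].
    { N. rewrite (rw2 E), K. reflexivity. }
    pose proof Re as Re'. destruct Re' as [K0 [a [b [Hc Hu]]]].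
    destruct (Hu _ (x ∘ p)) as [k0 [Hk0 _]].
    { N. apply mono.
      - rewrite !(rw2 H_fx), !(rw1 Hp2), !(rw2 K), Hc. reflexivity.
      - rewrite !(rw3 Hp1). N. rewrite Hc. reflexivity. }
    assert (F1 : u ∘ k0 = q1).
    { apply (regepi_epi _ Re). N. rewrite Hk0, Hp1. reflexivity. }
    assert (F2 : f ∘ k0 = q2).
    { apply (regepi_epi _ Re). N. rewrite Hk0, (rw2 H_fx), Hp2, K. reflexivity. }
    exists k0. split; [split; assumption|].
    intros h' [E1 E2]. apply mono; [rewrite F2, E2 | rewrite F1, E1]; reflexivity. }
  split; [|exact PBr].
  split; [exact H_fx|].
  intros Q q1 q2 E.
  destruct (pb_ex H_outer (u ∘ q1) q2) as [h [Hh1 Hh2]].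
  { N. rewrite (rw2 H_wu), E. reflexivity. }
  exists h. split.
  - split; [|exact Hh2]. apply mono.
    + N. rewrite (rw2 H_fx), Hh2. exact (eq_sym E).
    + N. exact Hh1.
  - intros h' [E1 E2]. apply (pb_unique H_outer).
    + N. rewrite Hh1, E1. reflexivity.
    + rewrite Hh2, E2. reflexivity.
Qed.
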